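(* Let $k$ be an algebraically closed field and $\alpha,\beta,\gamma$ partitions. (1) For $f,g\in V_{\alpha,\gamma}^\beta(k)$, the relation $(N_\alpha,N_\beta,f)\leq_{\rm deg}(N_\alpha,N_\beta,g)$ holds if and only if $G_g(k)$ is contained in the closure of $G_f(k)$ in $M_\alpha^\beta(k)$. (2) If $\Gamma$ is an LR-tableau of type $(\alpha,\beta,\gamma)$ and $f,g\in V_\Gamma(k)$, then $(N_\alpha,N_\beta,f)\leq_{\rm deg}(N_\alpha,N_\beta,g)$ (degeneration within $V_\Gamma(k)$) holds if and only if $G_g(k)$ is contained in the closure of $G_f(k)$ in $M_\alpha^\beta(k)$.
   Context: For a partition $\alpha$ let $N_\alpha=\bigoplus_ik[T]/(T^{\alpha_i})$. $H_\alpha^\beta(k)=\operatorname{Hom}_k(N_\alpha,N_\beta)$ is an affine space with Zariski topology; $M_\alpha^\beta(k)\subseteq H_\alpha^\beta(k)$ is the closed subset of $k[T]$-homomorphisms; $V_{\alpha,\gamma}^\beta(k)$ is the subset of injective $k[T]$-homomorphisms $f$ with $\operatorname{Coker}f\cong N_\gamma$. The group $\operatorname{Aut}_{k[T]}(N_\alpha)\times\operatorname{Aut}_{k[T]}(N_\beta)$ acts by $(a,h)\cdot f=hfa^{-1}$; $G_f(k)$ is the orbit of $f$. $(N_\alpha,N_\beta,f)\leq_{\rm deg}(N_\alpha,N_\beta,g)$ means $G_g(k)$ lies in the closure of $G_f(k)$ in $V_{\alpha,\gamma}^\beta(k)$ (induced topology). For an LR-tableau $\Gamma$ of type $(\alpha,\beta,\gamma)$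 (a skew Young tableau of shape $\beta\setminus\gamma$ with content determined by $\alpha$ satisfying the Littlewood–Richardson conditions), $V_\Gamma(k)\subseteq V_{\alpha,\gamma}^\beta(k)$ is the set of $f$ whose associated LR-tableau (the tableau recording, for each $i$, the shape of the module $N_\beta/T^i f(N_\alpha)$) is $\Gamma$; it is a union of orbits, and degeneration within $V_\Gamma(k)$ means containment in the closure within $V_\Gamma(k)$. *)

(* Defs.v *)
From HB Require Import structures.
From mathcomp Require Import all_boot all_order all_algebra.
From mathcomp Require Import mpoly.
Set Implicit Arguments. Unset Strict Implicit. Unset Printing Implicit Defensive.
Import Order.TTheory GRing.Theory.
Local Open Scope ring_scope.

Definition is_partition (s : seq nat) : bool :=
  sorted geq s && all (fun p => (0 < p)%N) s.

(** Conjugate partition, 0-indexed: [conj s r] = number of parts > r. *)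
Definition conj (s : seq nat) (r : nat) : nat := count (fun p => (r < p)%N) s.

Section Modules.
Variable k : fieldType.

(** Nilpotent Jordan block of size n, acting on row vectors x |-> x *m J:
    e_i |-> e_(i+1), e_(n-1) |-> 0; this is T acting on k[T]/(T^n)
    in the basis 1, T, ..., T^(n-1). *)
Definition jblock (n : nat) : 'M[k]_n := \matrix_(i, j) (j == i.+1 :> nat)%:R.

(** The matrix of T on N_alpha = (+)_i k[T]/(T^(alpha_i)), a k-space of
    dimension sumn alpha (block diagonal). *)
Fixpoint Tmx (s : seq nat) : 'M[k]_(sumn s) :=
  match s return 'M[k]_(sumn s) with
  | [::] => 0
  | n :: s' => block_mx (jblock n) 0 0 (Tmx s')
  end.

(** H_alpha^beta = Hom_k(N_alpha, N_beta): matrices F : 'M_(|alpha|,|beta|),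
    f(x) = x *m F. *)
Definition homk (a b : seq nat) := 'M[k]_(sumn a, sumn b).

Definition zclosed (m n : nat) (C : 'M[k]_(m, n) -> Prop) : Prop :=
  exists P : {mpoly k[m * n]} -> Prop,
    forall F, C F <-> (forall p, P p -> p.@[fun i => mxvec F 0 i] = 0).

(** Closure of S in the subset Y, with the induced Zariski topology:
    the intersection of all relatively closed sets Y /\ C containing S. *)
Definition closure_in (m n : nat) (Y S : 'M[k]_(m, n) -> Prop) (F : 'M[k]_(m, n))
  : Prop :=
  Y F /\ forall C, zclosed C -> (forall G, S G -> Y G -> C G) -> C F.

(** M_alpha^beta: k[T]-linear maps. *)
Definition Mhom (a b : seq nat) (F : homk a b) : Prop :=
  Tmx a *m F = F *m Tmx b.

Definition Aut (a : seq nat) (A : 'M[k]_(sumn a)) : Prop :=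
  A \in unitmx /\ Tmx a *m A = A *m Tmx a.

Definition orbit (a b : seq nat) (F : homk a b) (G : homk a b) : Prop :=
  exists (A : 'M[k]_(sumn a)) (H : 'M[k]_(sumn b)),
    Aut A /\ Aut H /\ G = invmx A *m F *m H.

(** N_beta / U (U a T-stable subspace given by the row space of a matrix)
    is isomorphic as a k[T]-module to N_lambda: there is a surjective
    k[T]-linear map N_beta -> N_lambda whose kernel is U. *)
Definition quot_iso (b : seq nat) (p : nat) (U : 'M[k]_(p, sumn b))
  (lam : seq nat) : Prop :=
  exists P : 'M[k]_(sumn b, sumn lam),
    Tmx b *m P = P *m Tmx lam /\ row_full P /\ (kermx P == U)%MS.

(** V_{alpha,gamma}^beta: injective k[T]-homomorphisms with cokernel ~ N_gamma. *)
Definition Vset (a b c : seq nat) (F : homk a b) : Prop :=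
  Mhom F /\ row_free F /\ quot_iso F c.

(** LR-tableaux of type (alpha, beta, gamma), encoded by the chain of shapes
    Gam = [:: lam^0; ...; lam^m] (lam^i = type of N_beta / T^i f(N_alpha),
    parts = Jordan block sizes; nth beta Gam i = beta for i >= m).  The boxes
    with entry i+1 form the skew diagram lam^(i+1) \ lam^i.  Following
    Ringel--Schmidt, diagrams are drawn with the parts as columns; written in
    terms of conjugate partitions mu^i = (lam^i)' (rows) the conditions are the
    usual ones: mu^0 = gamma', final shape beta', each mu^(i+1)\mu^i is a
    horizontal strip, entry j occurs alpha'_j times, and the reading word is a
    lattice permutation. *)
Definition LR_tableau (a b c : seq nat) (Gam : seq (seq nat)) : Prop :=
  let lam i := nth b Gam i in
  let mu i r := conj (lam i) r in
  [/\ Gam != [::], all is_partition Gam, lam 0%N = c & lam (size Gam).-1 = b] /\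
  (forall i r, mu i r <= mu i.+1 r /\ mu i.+1 r.+1 <= mu i r)%N /\
  (forall l, sumn (lam l.+1) - sumn (lam l) = conj a l)%N /\
  (forall l r, \sum_(s < r.+1) (mu l.+2 s - mu l.+1 s)
               <= \sum_(s < r) (mu l.+1 s - mu l s))%N.

Definition VGam (a b c : seq nat) (Gam : seq (seq nat)) (F : homk a b) : Prop :=
  Vset c F /\ forall i : nat, quot_iso (F *m Tmx b ^+ i) (nth b Gam i).

Definition deg_in (a b : seq nat) (Y : homk a b -> Prop) (F G : homk a b) : Prop :=
  forall X, orbit G X -> closure_in Y (orbit F) X.

End Modules.

(* Main.v *)
Require Import Defs.
From HB Require Import structures.
From mathcomp Require Import all_boot all_order all_algebra.
From mathcomp Require Import mpoly.
Set Implicit Arguments. Unset Strict Implicit. Unset Printing Implicit Defensive.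
Import GRing.Theory.
Local Open Scope ring_scope.

Section Aux.
Variable k : fieldType.

Lemma inv_comm n (A T : 'M[k]_n) : A \in unitmx -> A *m T = T *m A ->
  invmx A *m T = T *m invmx A.
Proof.
move=> uA hc.
rewrite -[invmx A *m T]mulmx1 -(mulmxV uA) !mulmxA.
by rewrite -(mulmxA (invmx A) T A) -hc mulmxA mulVmx // mul1mx.
Qed.

Lemma quot_iso_orb (b : seq nat) p (U : 'M[k]_(p, sumn b)) lam
  (B : 'M[k]_p) (H : 'M[k]_(sumn b)) :
  B \in unitmx -> Aut H -> quot_iso U lam -> quot_iso (B *m U *m H) lam.
Proof.
move=> uB [uH cH] [P [hP [fP kP]]].
exists (invmx H *m P); split; last split.
- by rewrite mulmxA -(inv_comm uH (esym cH)) -mulmxA hP mulmxA.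
- by rewrite /row_full (eqmxMfull _ (_ : row_full (invmx H))) // row_full_unit unitmx_inv.
- apply/andP; split.
  + have h1 : (kermx (invmx H *m P) *m invmx H <= U)%MS.
      have k1 : (kermx (invmx H *m P) *m invmx H <= kermx P)%MS.
        by apply/sub_kermxP; rewrite -mulmxA mulmx_ker.
      by apply: submx_trans k1 _; case/andP: kP.
    have h2 : (kermx (invmx H *m P) <= U *m H)%MS.
      have := submxMr H h1; by rewrite -mulmxA mulVmx // mulmx1.
    apply: submx_trans h2 _.
    by rewrite -mulmxA (@eqmxMfull _ _ _ _ B (U *m H)) ?row_full_unit.
  + apply/sub_kermxP.
    rewrite -!mulmxA (mulmxA H) mulmxV // mul1mx.
    have : (U <= kermx P)%MS by case/andP: kP.
    by move/sub_kermxP => ->; rewrite mulmx0.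
Qed.

Lemma orbit_Vset (a b c : seq nat) (G X : homk k a b) :
  Vset c G -> Defs.orbit G X -> Vset c X.
Proof.
move=> [hM [hF hQ]] [A [H [[uA cA] [aH ->]]]].
have aH' := aH; case: aH' => uH cH.
split; last split.
- rewrite /Mhom !mulmxA -(inv_comm uA (esym cA)) -!mulmxA; congr (_ *m _).
  by rewrite mulmxA hM -!mulmxA cH.
- rewrite /row_free mxrankMfree ?row_free_unit //.
  by rewrite (@eqmxMfull _ _ _ _ (invmx A) G) ?row_full_unit ?unitmx_inv.
- by apply: quot_iso_orb => //; rewrite unitmx_inv.
Qed.

Lemma orbit_VGam (a b c : seq nat) Gam (G X : homk k a b) :
  VGam c Gam G -> Defs.orbit G X -> VGam c Gam X.
Proof.
move=> [hV hQ] hO; split; first exact: orbit_Vset hO.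
case: hO => [A [H [[uA cA] [aH ->]]]] i.
have aH' := aH; case: aH' => uH cH.
have ci : H *m Tmx k b ^+ i = Tmx k b ^+ i *m H.
  have : GRing.comm H (Tmx k b) by rewrite /GRing.comm -!mulmxE.
  by move/(commrX i); rewrite /GRing.comm -!mulmxE.
rewrite -[invmx A *m G *m H *m _]mulmxA ci mulmxA -(mulmxA (invmx A) G).
by apply: quot_iso_orb => //; rewrite unitmx_inv.
Qed.

Lemma deg_gen (a b : seq nat) (Y : homk k a b -> Prop) (F G : homk k a b) :
  (forall X, Y X -> Mhom X) -> (forall Z X, Y Z -> Defs.orbit Z X -> Y X) ->
  Y F -> Y G -> (deg_in Y F G <-> deg_in (@Mhom k a b) F G).
Proof.
move=> YM Yo YF YG; split.
- move=> h X oX; have [hX hC] := h X oX; split; first exact: YM hX.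
  move=> C zC hS; apply: hC => // G' oG' yG; apply: hS => //; exact: YM yG.
- move=> h X oX; have [hX hC] := h X oX; split; first exact: Yo YG oX.
  move=> C zC hS; apply: hC => // G' oG' _; apply: hS => //; exact: Yo YF oG'.
Qed.

End Aux.

Theorem lemma3p2 (k : closedFieldType) (a b c : seq nat) :
  is_partition a -> is_partition b -> is_partition c ->
  (forall F G : homk k a b, Vset c F -> Vset c G ->
     (deg_in (Vset c) F G <-> deg_in (@Mhom k a b) F G)) /\
  (forall (Gam : seq (seq nat)) (F G : homk k a b),
     LR_tableau a b c Gam -> VGam c Gam F -> VGam c Gam G ->
     (deg_in (VGam c Gam) F G <-> deg_in (@Mhom k a b) F G)).
Proof.
move=> _ _ _; split.
- move=> F G hF hG; apply: deg_gen => //.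
  + by move=> X [].
  + by move=> Z X; apply: orbit_Vset.
- move=> Gam F G _ hF hG; apply: deg_gen => //.
  + by move=> X [[]].
  + by move=> Z X; apply: orbit_VGam.
Qed.
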